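(* Let $\varphi:\mathfrak{h}\to V^*$ be a real or complex factorization structure of dimension $m$ and $j\in\{1,\ldots,m\}$, and let $U=\{\ell\in\mathbb{P}(V_j):\dim(\varphi(\mathfrak{h})\cap\Sigma^0_{j,\ell})=1\}$. Then there is a nonempty Zariski-open subset $W\subset U$ on which the map $\ell\mapsto\varphi^{-1}(\varphi(\mathfrak{h})\cap\Sigma^0_{j,\ell})\in\mathbb{P}(\mathfrak{h})$ is a regular map, given in homogeneous coordinates on $\mathbb{P}(V_j)$ and $\mathbb{P}(\mathfrak{h})$ by homogeneous polynomials of a common degree at most $m$.
   Context: $V_1,\ldots,V_m$ are 2-dimensional vector spaces over $\mathbb{F}=\mathbb{R}$ or $\mathbb{C}$, $V^*=V_1^*\otimes\cdots\otimes V_m^*$; for $\ell\in\mathbb{P}(V_j)$, $\Sigma^0_{j,\ell}=V_1^*\otimes\cdots\otimes\ell^0\otimes\cdots\otimes V_m^*$ with $\ell^0$ the annihilator of $\ell$ in slot $j$. A factorization structure of dimension $m$ is an injective linear map $\varphi:\mathfrak{h}\to V^*$, $\dim\mathfrak{h}=m+1$, with $\dim(\varphi(\mathfrak{h})\cap\Sigma^0_{j,\ell})=1$ for every $j$ and all $\ell$ in a nonempty Zariski-open subset of $\mathbb{P}(V_j)$. *)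

(* Defs.v *)
From HB Require Import structures.
From mathcomp Require Import all_boot all_order all_algebra.
From mathcomp Require Import reals.
From mathcomp.real_closed Require Import complex.
Set Implicit Arguments. Unset Strict Implicit. Unset Printing Implicit Defensive.
Import Order.TTheory GRing.Theory Num.Theory.
Local Open Scope ring_scope.

Section FactStruct.
Variable F : fieldType.

(* Each V_j is F^2 (row vectors 'rV[F]_2); a covector alpha in V_j^* is given by
   its coordinates in the dual basis, also a row vector 'rV[F]_2, acting by
   alpha(w) = alpha_0 w_0 + alpha_1 w_1. *)
Definition covec_app (alpha w : 'rV[F]_2) : F := \sum_(k < 2) alpha 0 k * w 0 k.

(* V^* = V_1^* (x) ... (x) V_m^*, represented by coefficient arrays indexed by
   multi-indices sigma : 'I_m -> 'I_2 (coordinates in the basis e^sigma_1 (x) ... ). *)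
Definition Vstar (m : nat) := {ffun {ffun 'I_m -> 'I_2} -> F^o}.

Definition pure_tensor (m : nat) (alpha : 'I_m -> 'rV[F]_2) : Vstar m :=
  [ffun sigma : {ffun 'I_m -> 'I_2} => \prod_(i < m) alpha i 0 (sigma i)].

Definition dual_basis (k : 'I_2) : 'rV[F]_2 := delta_mx 0 k.

(* generator of the annihilator ell^0 of the line ell = F v (v <> 0):
   w |-> v_1 w_0 - v_0 w_1 *)
Definition ann (v : 'rV[F]_2) : 'rV[F]_2 := \row_(k < 2) (if k == 0 then v 0 1 else - v 0 0).

Definition annihilator (v : 'rV[F]_2) : {vspace 'rV[F]_2} :=
  <[ann v]>%VS.

(* Sigma^0_{j,ell} = V_1^* (x) ... (x) ell^0 (x) ... (x) V_m^*, the span of the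
   tensor products of basis vectors of the factors (ell^0 spanned by ann v). *)
Definition Sigma0 (m : nat) (j : 'I_m) (v : 'rV[F]_2) : {vspace Vstar m} :=
  <<[seq pure_tensor (fun i => if i == j then ann v else dual_basis (sigma i))
     | sigma : {ffun 'I_m -> 'I_2}]>>%VS.

(* Binary forms: c = [:: c_0; ...; c_d] is the homogeneous polynomial
   sum_k c_k x^k y^(d-k) of degree d = size c - 1 (the empty list is 0). *)
Definition bform_eval (c : seq F) (v : 'rV[F]_2) : F :=
  \sum_(k < size c) c`_k * v 0 0 ^+ k * v 0 1 ^+ ((size c).-1 - k).

(* Points of P(V_j) = P^1 are represented by nonzero vectors v; a subset of
   P^1 is a predicate on nonzero vectors. *)
Definition zariski_open_P1 (W : 'rV[F]_2 -> Prop) : Prop :=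
  exists fs : seq (seq F), forall v, v != 0 ->
    (W v <-> has (fun c => bform_eval c v != 0) fs).

Definition nonempty_P1 (W : 'rV[F]_2 -> Prop) : Prop := exists v, v != 0 /\ W v.

Definition factorization_structure (m : nat) (phi : 'Hom('rV[F]_m.+1, Vstar m)) : Prop :=
  injective phi /\
  forall j : 'I_m, exists O : 'rV[F]_2 -> Prop,
    [/\ zariski_open_P1 O, nonempty_P1 O &
        forall v, v != 0 -> O v -> \dim (limg phi :&: Sigma0 j v)%VS = 1%N].

Definition hcoords (m d : nat) (P : 'I_m.+1 -> 'I_d.+1 -> F) (v : 'rV[F]_2) : 'rV[F]_m.+1 :=
  \row_(i < m.+1) \sum_(k < d.+1) P i k * v 0 0 ^+ k * v 0 1 ^+ (d - k).

Definition proposition2p1_over : Prop :=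
  forall (m : nat) (phi : 'Hom('rV[F]_m.+1, Vstar m)),
  factorization_structure phi ->
  forall j : 'I_m,
  let U := fun v : 'rV[F]_2 => \dim (limg phi :&: Sigma0 j v)%VS = 1%N in
  exists W : 'rV[F]_2 -> Prop,
    [/\ zariski_open_P1 W, nonempty_P1 W,
        (forall v, v != 0 -> W v -> U v) &
        exists d : nat, (d <= m)%N /\
        exists P : 'I_m.+1 -> 'I_d.+1 -> F,
          forall v, v != 0 -> W v ->
            hcoords P v != 0 /\
            (phi @^-1: (limg phi :&: Sigma0 j v))%VS = <[hcoords P v]>%VS].

End FactStruct.

(* Main.v *)
Require Import Defs.
From HB Require Import structures.
From mathcomp Require Import all_boot all_order all_algebra.
From mathcomp Require Import reals.
From mathcomp.real_closed Require Import complex.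
From mathcomp Require Import ring perm zify.
From Stdlib Require Import ClassicalEpsilon.
Set Implicit Arguments. Unset Strict Implicit. Unset Printing Implicit Defensive.
Import Order.TTheory GRing.Theory Num.Theory.
Local Open Scope ring_scope.

Section Forms.
Variable F : fieldType.
Implicit Types (f g h : 'rV[F]_2 -> F).

Fixpoint hform (d : nat) f : Prop :=
  match d with
  | 0 => exists c, forall v, f v = c
  | d'.+1 => exists g h, [/\ hform d' g, hform d' h & forall v, f v = v 0 0 * g v + v 0 1 * h v]
  end.

Lemma hf_ext d f g : (forall v, f v = g v) -> hform d f -> hform d g.
Proof.
case: d => [|d] E /=.
  by case=> c Hc; exists c => v; rewrite -E.
by case=> g1 [h1 [H1 H2 H3]]; exists g1, h1; split => // v; rewrite -E.
Qed.

Lemma hf0 d : hform d (fun _ => 0).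
Proof.
elim: d => [|d IH] /=; first by exists 0.
by exists (fun _ => 0), (fun _ => 0); split => // v; rewrite !mulr0 addr0.
Qed.

Lemma hfD d f g : hform d f -> hform d g -> hform d (fun v => f v + g v).
Proof.
elim: d f g => [|d IH] f g /=.
  by case=> a Ha [b Hb]; exists (a + b) => v; rewrite Ha Hb.
case=> g1 [h1 [G1 H1 E1]] [g2 [h2 [G2 H2 E2]]].
exists (fun v => g1 v + g2 v), (fun v => h1 v + h2 v); split; try exact: IH.
by move=> v; rewrite E1 E2; ring.
Qed.

Lemma hfZ d c f : hform d f -> hform d (fun v => c * f v).
Proof.
elim: d f => [|d IH] f /=.
  by case=> a Ha; exists (c * a) => v; rewrite Ha.
case=> g1 [h1 [G1 H1 E1]].
exists (fun v => c * g1 v), (fun v => c * h1 v); split; try exact: IH.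
by move=> v; rewrite E1; ring.
Qed.

Lemma hf_sum d I (r : seq I) (P : pred I) (G : I -> 'rV[F]_2 -> F) :
  (forall i, P i -> hform d (G i)) -> hform d (fun v => \sum_(i <- r | P i) G i v).
Proof.
move=> H; elim: r => [|a r IH].
  by apply: hf_ext (hf0 d) => v; rewrite big_nil.
case Pa: (P a).
  by apply: hf_ext (hfD (H a Pa) IH) => v; rewrite big_cons Pa.
by apply: hf_ext IH => v; rewrite big_cons Pa.
Qed.

Lemma hf_mul d1 d2 f g : hform d1 f -> hform d2 g -> hform (d1 + d2) (fun v => f v * g v).
Proof.
elim: d1 f => [|d IH] f /=.
  by case=> a Ha Hg; apply: hf_ext (hfZ a Hg) => v; rewrite Ha.
case=> g1 [h1 [G1 H1 E1]] Hg.
rewrite /=.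
exists (fun v => g1 v * g v), (fun v => h1 v * g v); split; try exact: IH.
by move=> v; rewrite E1; ring.
Qed.

Lemma hf_lin a b : hform 1 (fun v => v 0 0 * a + v 0 1 * b).
Proof.
by exists (fun _ => a), (fun _ => b); split => //; [exists a | exists b].
Qed.

Lemma hf_prod n (G : 'I_n -> 'rV[F]_2 -> F) :
  (forall i, hform 1 (G i)) -> hform n (fun v => \prod_(i < n) G i v).
Proof.
elim: n G => [|n IH] G H.
  by exists 1 => v; rewrite big_ord0.
have := hf_mul (IH (fun i => G (widen_ord (leqnSn n) i)) (fun i => H _)) (H ord_max).
rewrite addn1; apply: hf_ext => v; by rewrite big_ord_recr.
Qed.

Definition hsum d (c : nat -> F) (v : 'rV[F]_2) :=
  \sum_(k < d.+1) c k * v 0 0 ^+ k * v 0 1 ^+ (d - k).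

Lemma hf_coef d f : hform d f -> exists c, forall v, f v = hsum d c v.
Proof.
elim: d f => [|d IH] f /=.
  by case=> a Ha; exists (fun _ => a) => v; rewrite /hsum big_ord1 Ha !expr0 !mulr1.
case=> g1 [h1 [/IH [a Ha] /IH [b Hb] E]].
exists (fun k => (if k is k'.+1 then a k' else 0) + (if (k < d.+1)%N then b k else 0)) => v.
rewrite E Ha Hb /hsum.
rewrite [RHS](eq_bigr (fun k : 'I_d.+2 => (if nat_of_ord k is k'.+1 then a k' else 0) * v 0 0 ^+ k * v 0 1 ^+ (d.+1 - k) + (if (k < d.+1)%N then b k else 0) * v 0 0 ^+ k * v 0 1 ^+ (d.+1 - k))); last by move=> k _; rewrite /= !mulrDl.
rewrite big_split /=; congr (_ + _).
  rewrite [RHS]big_ord_recl /= !mul0r add0r mulr_sumr; apply: eq_bigr => i _.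
  rewrite /bump /= add1n subSS exprS; ring.
rewrite [RHS]big_ord_recr /= ltnn !mul0r addr0 mulr_sumr; apply: eq_bigr => i _.
rewrite /= ltn_ord subSn; last by rewrite -ltnS.
rewrite exprS; ring.
Qed.

Lemma coef_hf d c : hform d (hsum d c).
Proof.
elim: d c => [|d IH] c /=.
  by exists (c 0%N) => v; rewrite /hsum big_ord1 !expr0 !mulr1.
exists (hsum d (fun k => c k.+1)), (hsum d (fun k => if k == 0%N then c 0%N else 0)).
split => // v; rewrite /hsum [LHS]big_ord_recl /= subn0.
rewrite [X in _ = _ + _ * X]big_ord_recl /=.
rewrite [X in _ * (_ + X)]big1 ?addr0 ?subn0; last by move=> i _; rewrite !mul0r.
rewrite mulr_sumr exprS.
have -> : \sum_(i < d.+1) c (bump 0 i) * v 0 0 ^+ bump 0 i * v 0 1 ^+ (d.+1 - bump 0 i) =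
  \sum_(i < d.+1) v 0 0 * (c i.+1 * v 0 0 ^+ i * v 0 1 ^+ (d - i)).
  by apply: eq_bigr => i _; rewrite /bump /= add1n subSS exprS; ring.
ring.
Qed.

Lemma bform_mkseq d (c : nat -> F) v : bform_eval (mkseq c d.+1) v = hsum d c v.
Proof.
rewrite /bform_eval /hsum size_mkseq /=; apply: eq_bigr => i _.
by rewrite nth_mkseq.
Qed.

Lemma bform_hf (c : seq F) : hform (size c).-1 (bform_eval c).
Proof.
case Ec: (size c) => [|d].
  apply: hf_ext (hf0 0) => v; rewrite /bform_eval.
  by move: Ec; case: c => // _; rewrite big_ord0.
apply: hf_ext (coef_hf d (nth 0 c)) => v; rewrite /bform_eval /hsum.
by rewrite Ec.
Qed.

End Forms.

Section Sig.
Variable F : fieldType.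
Variables (m : nat) (j : 'I_m).
Local Notation VS := (Vstar F m).
Local Notation SG := {ffun 'I_m -> 'I_2}.

Definition upd (s : SG) (b : 'I_2) : SG := [ffun i => if i == j then b else s i].

Lemma upd_id s : upd s (s j) = s.
Proof. by apply/ffunP => i; rewrite ffunE; case: eqP => // ->. Qed.
Lemma upd_j s b : upd s b j = b.
Proof. by rewrite ffunE eqxx. Qed.
Lemma upd_upd s b c : upd (upd s b) c = upd s c.
Proof. by apply/ffunP => i; rewrite !ffunE; case: eqP. Qed.

Lemma I2_cases (k : 'I_2) : k = 0 \/ k = 1.
Proof. by case: k => [[|[|k]]] Hk //; [left|right]; apply/val_inj. Qed.

Definition Cv (v : 'rV[F]_2) (T : VS) : VS :=
  [ffun s => v 0 0 * T (upd s 0) + v 0 1 * T (upd s 1)].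

Lemma Cv_is_linear v : linear (Cv v).
Proof.
move=> a T1 T2; apply/ffunP => s; rewrite !ffunE /=.
rewrite /GRing.scale /=. ring.
Qed.

HB.instance Definition _ v := GRing.isLinear.Build F VS VS _ (Cv v) (Cv_is_linear v).

Definition gen (v : 'rV[F]_2) (s : SG) : VS :=
  pure_tensor (fun i => if i == j then ann v else dual_basis F (s i)).

Lemma gen_eval v s t b : gen v s t = ann v 0 (t j) * (upd s b == upd t b)%:R.
Proof.
rewrite /gen /pure_tensor ffunE (bigD1 j) //= eqxx; congr (_ * _).
have E i : i != j -> (if i == j then ann v else dual_basis F (s i)) 0 (t i) = (s i == t i)%:R.
  by move=> ne; rewrite (negbTE ne) /dual_basis mxE eqxx eq_sym.
rewrite (eq_bigr _ E).
case H: (upd s b == upd t b).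
  apply: big1 => i ne; move/eqP: H => /ffunP /(_ i); rewrite !ffunE (negbTE ne) => ->.
  by rewrite eqxx.
have [i Hi] : exists i, upd s b i != upd t b i.
  apply/existsP; apply: contraFT H => /existsPn Hn; apply/eqP/ffunP => i.
  by apply/eqP; move: (Hn i); rewrite negbK.
have ne : i != j by apply: contraNneq Hi => ->; rewrite !upd_j.
rewrite (bigD1 i) //=; move: Hi; rewrite !ffunE (negbTE ne) => /negbTE ->.
by rewrite mul0r.
Qed.

Lemma ann0 (v : 'rV[F]_2) : ann v 0 0 = v 0 1. Proof. by rewrite mxE. Qed.
Lemma ann1 (v : 'rV[F]_2) : ann v 0 1 = - v 0 0. Proof. by rewrite mxE. Qed.

Lemma Cv_gen v s : Cv v (gen v s) = 0.
Proof.
apply/ffunP => t; rewrite [RHS]ffunE [LHS]ffunE (gen_eval _ _ _ 0) (gen_eval _ _ (upd t 1) 0).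
rewrite !upd_upd !upd_j ann0 ann1; ring.
Qed.

Lemma Sigma0_sub v T : T \in Sigma0 j v -> Cv v T = 0.
Proof.
move=> HT; apply/eqP; rewrite -(lfunE (Cv v)) -memv_ker; move: T HT; apply/subvP.
apply/span_subvP => T /mapP [s _ ->]; rewrite memv_ker lfunE /=.
by rewrite Cv_gen.
Qed.

Lemma Sigma0_sup v T : v != 0 -> Cv v T = 0 -> T \in Sigma0 j v.
Proof.
move=> nz HC.
have [b [nzb Hb]] : exists b : 'I_2, ann v 0 b != 0 /\
   forall t, T (upd t b) * ann v 0 (t j) = ann v 0 b * T t.
  have HCt t : v 0 0 * T (upd t 0) + v 0 1 * T (upd t 1) = 0.
    by move/ffunP: HC => /(_ t); rewrite !ffunE.
  case E1: (v 0 1 == 0).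
    exists 1; rewrite ann1 oppr_eq0; split.
      apply: contra nz => /eqP E0; apply/eqP/matrixP => i k.
      by rewrite !mxE (ord1 i); case: (I2_cases k) => ->; [exact: E0 | exact/eqP].
    move=> t; have := HCt t; case: (I2_cases (t j)) => Ht; rewrite Ht ?ann0 ?ann1.
      rewrite (_ : upd t 0 = t); last by rewrite -{2}(upd_id t) Ht.
      move=> H; rewrite -[RHS]addr0 -H; ring.
    rewrite (_ : upd t 1 = t); last by rewrite -{2}(upd_id t) Ht.
    move=> H; ring.
  exists 0; rewrite ann0 E1; split => // t.
  have := HCt t; case: (I2_cases (t j)) => Ht; rewrite Ht ?ann0 ?ann1.
    rewrite (_ : upd t 0 = t); last by rewrite -{2}(upd_id t) Ht.
    move=> H; ring.
  rewrite (_ : upd t 1 = t); last by rewrite -{2}(upd_id t) Ht.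
  by move=> H; rewrite mulrN mulrC; apply/eqP; rewrite eqr_oppLR -addr_eq0 H.
have -> : T = \sum_(s : SG) ((s j == b)%:R * T s / ann v 0 b) *: gen v s.
  apply/ffunP => t; rewrite sum_ffunE (bigD1 (upd t b)) //= big1.
    rewrite ffunE (gen_eval _ _ _ b) upd_j eqxx upd_upd eqxx addr0.
    by rewrite /GRing.scale /= !mulr1 mul1r mulrAC Hb mulrAC mulfV // mul1r.
  move=> s ne; rewrite ffunE (gen_eval _ _ _ b).
  rewrite /GRing.scale /=.
  have [Hs|Hs] := eqVneq (s j) b; last by rewrite !mul0r.
  have [Hu|Hu] := eqVneq (upd s b) (upd t b); last by rewrite !mulr0.
  by move: ne; rewrite -Hu -Hs upd_id eqxx.
apply: rpred_sum => s _; apply: memvZ; apply: memv_span.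
by apply: map_f; rewrite mem_enum.
Qed.

End Sig.

Section Mx.
Variable F : fieldType.

Lemma det_hf n (A : 'rV[F]_2 -> 'M[F]_n) :
  (forall i k, hform 1 (fun v => A v i k)) -> hform n (fun v => \det (A v)).
Proof.
move=> H.
have Hs := @hf_sum F n _ (index_enum {perm 'I_n}) xpredT
   (fun s : {perm 'I_n} => fun v => (-1) ^+ s * \prod_i A v i (s i)).
apply: hf_ext (Hs _) => //.
by move=> s _; apply: (@hfZ F n ((-1) ^+ s) (fun v => \prod_i A v i (s i))); apply: hf_prod => i; apply: H.
Qed.

Lemma adj_hf n (A : 'rV[F]_2 -> 'M[F]_n.+1) :
  (forall i k, hform 1 (fun v => A v i k)) -> forall i k, hform n (fun v => \adj (A v) i k).
Proof.
move=> H i k; apply: hf_ext (hfZ ((-1) ^+ (k + i)) (det_hf (A := fun v => row' k (col' i (A v))) _)).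
  by move=> v; rewrite mxE.
by move=> a b; apply: hf_ext (H (lift k a) (lift i b)) => v; rewrite !mxE.
Qed.

Definition kvec m (B : 'M[F]_(m.+1, m)) : 'rV[F]_m.+1 :=
  \row_i (if unlift ord_max i is Some i' then
            - (row ord_max B *m \adj (rowsub (lift ord_max) B)) 0 i'
          else \det (rowsub (lift ord_max) B)).

Lemma kvec_uniq m (B : 'M[F]_(m.+1, m)) (y : 'rV[F]_m.+1) :
  \det (rowsub (lift ord_max) B) != 0 -> y *m B = 0 ->
  y = (y 0 ord_max / \det (rowsub (lift ord_max) B)) *: kvec B.
Proof.
set B' := rowsub _ B; set rl := row ord_max B => nz H.
set y' := \row_i y 0 (lift ord_max i).
have Hs : y' *m B' = - (y 0 ord_max *: rl).
  apply/eqP; rewrite -subr_eq0 opprK -{}H; apply/eqP/matrixP => a k.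
  rewrite !mxE [RHS]big_ord_recr /=; congr (_ + _); last by rewrite (ord1 a).
  apply: (@eq_bigr _ _ _ 'I_m) => i _; rewrite !mxE (ord1 a).
  have -> : lift ord_max i = widen_ord (leqnSn m) i by apply/val_inj => /=; exact: lift_max.
  by [].
have uB : B' \in unitmx by rewrite unitmxE unitfE.
have Hy' : y' = - (y 0 ord_max *: rl) *m invmx B' by rewrite -Hs mulmxK.
apply/matrixP => a i; rewrite (ord1 a) !mxE.
case: unliftP => [i'|] ->; last first.
  by rewrite -/B' divrK // unitfE.
rewrite -/B' -/rl.
have -> : y 0 (lift ord_max i') = y' 0 i' by rewrite mxE.
rewrite Hy' /invmx uB -scalemxAr mulNmx -scalemxAl !mxE; ring.
Qed.

Lemma kvec_hf n (B : 'rV[F]_2 -> 'M[F]_(n.+1, n)) :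
  (forall i k, hform 1 (fun v => B v i k)) -> forall i, hform n (fun v => kvec (B v) 0 i).
Proof.
move=> H i; case: (unliftP ord_max i) => [i'|] ->; last first.
  apply: hf_ext (det_hf (A := fun v => rowsub (lift ord_max) (B v)) _).
    by move=> v; rewrite /kvec mxE unlift_none.
  by move=> a b; apply: hf_ext (H _ b) => v; rewrite mxE.
clear i; case: n B H i' => [|n] B H i'; first by case: i'.
have HB' : forall a b, hform 1 (fun v => rowsub (lift ord_max) (B v) a b).
  by move=> a b; apply: hf_ext (H _ b) => v; rewrite mxE.
have := @hf_sum F n.+1 _ (index_enum 'I_n.+1) xpredT
  (fun k v => B v ord_max k * \adj (rowsub (lift ord_max) (B v)) k i')
  (fun k _ => hf_mul (H ord_max k) (adj_hf HB' k i')).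
move=> /(hfZ (-1)); apply: hf_ext => v.
rewrite /kvec mxE liftK !mxE mulN1r; congr (- _); apply: eq_bigr => k _.
by rewrite !mxE.
Qed.

End Mx.

Section Main.
Import VectorInternalTheory.
Variable F : fieldType.
Variables (m : nat) (phi : 'Hom('rV[F]_m.+1, Vstar F m)) (j : 'I_m).
Local Notation VS := (Vstar F m).

Definition Pv (v : 'rV[F]_2) := (phi @^-1: (limg phi :&: Sigma0 j v))%VS.

Definition Mt (v : 'rV[F]_2) :=
  \matrix_i v2r (Cv j v (phi (delta_mx 0 i))).

Definition Sb (b : 'I_2) (T : VS) : VS := [ffun s => T (upd j s b)].
Definition Mb (b : 'I_2) :=
  \matrix_i v2r (Sb b (phi (delta_mx 0 i))).

Lemma Mt_mul v x : x *m Mt v = v2r (Cv j v (phi x)).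
Proof.
rewrite mulmx_sum_row {2}(row_sum_delta x) !linear_sum; apply: eq_bigr => i _.
by rewrite rowK !linearZ.
Qed.

Lemma Mt_lin v : Mt v = v 0 0 *: Mb 0 + v 0 1 *: Mb 1.
Proof.
apply/matrixP => i k; rewrite !mxE.
have -> : Cv j v (phi (delta_mx 0 i)) =
   v 0 0 *: Sb 0 (phi (delta_mx 0 i)) + v 0 1 *: Sb 1 (phi (delta_mx 0 i)).
  by apply/ffunP => s; rewrite !ffunE.
by rewrite linearD !linearZ !mxE.
Qed.

Lemma kerP v x : v != 0 -> (x \in Pv v) = (x *m Mt v == 0).
Proof.
move=> nz; rewrite /Pv -memv_preim memv_cap memv_img ?memvf //= Mt_mul.
rewrite -(linear0 v2r) (inj_eq (@v2r_inj _ _)).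
apply/idP/idP => [/Sigma0_sub -> // | /eqP H]; exact: Sigma0_sup.
Qed.

Lemma dimP v : injective phi -> \dim (Pv v) = \dim (limg phi :&: Sigma0 j v).
Proof.
move=> inj; rewrite -(limg_dim_eq (f := phi) (U := Pv v)) ?lpreimK ?capvSl //.
by move/lker0P: inj => /eqP ->; rewrite capv0.
Qed.

Lemma main_j (inj : injective phi) (O : 'rV[F]_2 -> Prop) (zO : zariski_open_P1 O)
  (v0 : 'rV[F]_2) (nz0 : v0 != 0) (Ov0 : O v0)
  (HO : forall v, v != 0 -> O v -> \dim (limg phi :&: Sigma0 j v) = 1%N) :
  let U := fun v : 'rV[F]_2 => \dim (limg phi :&: Sigma0 j v) = 1%N in
  exists W : 'rV[F]_2 -> Prop,
    [/\ zariski_open_P1 W, nonempty_P1 W,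
        (forall v, v != 0 -> W v -> U v) &
        exists d : nat, (d <= m)%N /\
        exists P : 'I_m.+1 -> 'I_d.+1 -> F,
          forall v, v != 0 -> W v ->
            hcoords P v != 0 /\
            (phi @^-1: (limg phi :&: Sigma0 j v))%VS = <[hcoords P v]>%VS].
Proof.
move=> U.
have dim1 v : v != 0 -> O v -> \dim (Pv v) = 1%N by move=> *; rewrite dimP // HO.
set A0 := Mt v0.
have pnz : vpick (Pv v0) != 0 by rewrite vpick0 -dimv_eq0 dim1.
set p := vpick (Pv v0) in pnz.
have Pp : Pv v0 = <[p]>%VS.
  apply/eqP; rewrite eq_sym eqEdim -memvE memv_pick dim_vline pnz dim1 //.
have rk : \rank A0 = m.
  have K1 : (p <= kermx A0)%MS by rewrite sub_kermx -kerP // Pp memv_line.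
  have K2 : (kermx A0 <= p)%MS.
    apply/row_subP => i.
    have : row i (kermx A0) \in Pv v0 by rewrite kerP // -row_mul mulmx_ker row0.
    by rewrite Pp => /vlineP [k ->]; apply: scalemx_sub (submx_refl p).
  have rp : \rank p = 1%N.
    by apply/eqP; rewrite eqn_leq rank_leq_row lt0n mxrank_eq0 pnz.
  have := mxrankS K1; have := mxrankS K2; rewrite rp mxrank_ker.
  have := rank_leq_row A0; lia.
set E := col_ebase A0; set G := row_ebase A0.
have uE : E \in unitmx := col_ebase_unit A0.
have uG : G \in unitmx := row_ebase_unit A0.
pose B v := invmx E *m Mt v *m invmx G *m (pid_mx m : 'M_(_, m)).
pose B' v := rowsub (lift ord_max) (B v).
have B0 : B v0 = pid_mx m.
  rewrite /B -/A0 -{1}(mulmx_ebase A0) rk -/E -/G -!mulmxA mulKmx // mulKVmx //.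
  rewrite mul_pid_mx; congr pid_mx; have := rank_leq_col A0; rewrite rk; lia.
have B'0 : B' v0 = 1%:M.
  apply/matrixP => i k; rewrite /B' mxE B0 !mxE lift_max ltn_ord andbT.
  reflexivity.
have det0 : \det (B' v0) != 0 by rewrite B'0 det1 oner_neq0.
pose Bb b := invmx E *m Mb b *m invmx G *m (pid_mx m : 'M_(_, m)).
have Blin v : B v = v 0 0 *: Bb 0 + v 0 1 *: Bb 1.
  by rewrite /B Mt_lin mulmxDr -!scalemxAr !mulmxDl -!scalemxAl.
have hB : forall i k, hform 1 (fun v => B v i k).
  move=> i k; apply: hf_ext (hf_lin (Bb 0 i k) (Bb 1 i k)) => v.
  by rewrite Blin !mxE.
have hB' : forall i k, hform 1 (fun v => B' v i k).
  by move=> i k; apply: hf_ext (hB (lift ord_max i) k) => v; rewrite [RHS]mxE.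
have hdet : hform m (fun v => \det (B' v)) := det_hf hB'.
pose kx v := kvec (B v) *m invmx E.
have hkx : forall i, hform m (fun v => kx v 0 i).
  move=> i.
  have := @hf_sum F m _ (index_enum 'I_m.+1) xpredT
    (fun k v => invmx E k i * kvec (B v) 0 k) (fun k _ => hfZ _ (kvec_hf hB k)).
  apply: hf_ext => v; rewrite mxE; apply: eq_bigr => k _; exact: mulrC.
pose cf i := proj1_sig (constructive_indefinite_description _ (hf_coef (hkx i))).
have cfP i v : kx v 0 i = hsum m (cf i) v.
  exact: (proj2_sig (constructive_indefinite_description _ (hf_coef (hkx i)))).
pose P (i : 'I_m.+1) (k : 'I_m.+1) := cf i k.
have HP v : hcoords P v = kx v.
  by apply/matrixP => a i; rewrite (ord1 a) [LHS]mxE cfP.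
case: zO => fs Hfs.
have hprod c : hform ((size c).-1 + m) (fun v => bform_eval c v * \det (B' v)).
  exact: hf_mul (bform_hf c) hdet.
pose cf2 c := proj1_sig (constructive_indefinite_description _ (hf_coef (hprod c))).
have cf2P c v : bform_eval c v * \det (B' v) = hsum ((size c).-1 + m) (cf2 c) v.
  exact: (proj2_sig (constructive_indefinite_description _ (hf_coef (hprod c)))).
exists (fun v => O v /\ \det (B' v) != 0); split.
- exists [seq mkseq (cf2 c) ((size c).-1 + m).+1 | c <- fs] => v nz.
  rewrite has_map (Hfs v nz).
  have -> : has (preim (fun c => mkseq (cf2 c) ((size c).-1 + m).+1)
          (fun c => bform_eval c v != 0)) fs =
       has (fun c => bform_eval c v != 0) fs && (\det (B' v) != 0).
    elim: fs {Hfs} => //= c s ->.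
    by rewrite bform_mkseq -cf2P mulf_eq0 negb_or andb_orl.
  by split => [[-> ->] | /andP []].
- by exists v0.
- by move=> v nz [Ov _]; exact: HO.
exists m; split => //; exists P => v nz [Ov dv].
rewrite HP.
have kyn : kvec (B v) != 0.
  apply/negP => /eqP /matrixP /(_ 0 ord_max); rewrite !mxE unlift_none => /eqP.
  by rewrite (negbTE dv).
have kxn : kx v != 0.
  apply: contraNneq kyn => H; rewrite -(mulmxKV uE (kvec (B v))) -/(kx v) H mul0mx.
  by [].
have sub : (Pv v <= <[kx v]>)%VS.
  apply/subvP => x; rewrite kerP // => /eqP Hx.
  have Hy : (x *m E) *m B v = 0.
    by rewrite /B !mulmxA mulmxK // Hx !mul0mx.
  have := kvec_uniq dv Hy => Ey.
  apply/vlineP; exists ((x *m E) 0 ord_max / \det (B' v)).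
  by rewrite /kx scalemxAl -Ey mulmxK.
split => //; apply/eqP; rewrite -/(Pv v) eqEdim sub dim_vline kxn dim1 //.
Qed.

End Main.

Lemma prop_over (F : fieldType) : proposition2p1_over F.
Proof.
move=> m phi [inj H] j; case: (H j) => O [zO [v0 [nz0 Ov0]] HO].
have := main_j inj zO nz0 Ov0 => /(_ j HO); exact.
Qed.

Unset Implicit Arguments.

Theorem proposition2p1 (R : realType) :
  proposition2p1_over R /\ proposition2p1_over R[i].
Proof. by split; apply: prop_over. Qed.
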